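(* Let $G$ be a graph, $\mathcal U=\{U_1,\dots,U_m\}$ a partition of $V(G)$, and $\mathcal C$ a $\mathcal U$-connecting path system in $G$. Then there exists a $\mathcal U$-connecting path system $\mathcal C'$ in $G$ such that (a) $\mathcal C'$ contains no edge with both ends in the same $U_i$, and (b) for all $1\leq i<j\leq m$, $\mathcal C'$ contains at most $2$ edges with one end in $U_i$ and the other in $U_j$.
   Context: A path system in $G$ is a collection of vertex-disjoint (non-trivial) paths in $G$, also viewed as the subgraph formed by their union. Given a partition $\mathcal U$ of $V(G)$ and a path system $\mathcal P$, the reduced multigraph $R_{\mathcal U}(\mathcal P)$ has vertex set $\mathcal U$ and, for each path of $\mathcal P$ with endpoints in $U\in\mathcal U$ and $U'\in\mathcal U$, one edge between $U$ and $U'$ (a loop if $U=U'$; loops contribute 2 to the degree). $\mathcal P$ is $\mathcal U$-connecting if $R_{\mathcal U}(\mathcal P)$ is Eulerian, i.e. connected (on all of $\mathcal U$) with every vertex of even degree. *)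

(* Defs.v *)
From mathcomp Require Import all_boot.
Set Implicit Arguments. Unset Strict Implicit. Unset Printing Implicit Defensive.

(* A finite simple graph: vertex type T : finType, adjacency e : rel T,
   assumed symmetric and irreflexive (hypotheses of the theorem).
   A path is a nonempty vertex sequence x :: q with consecutive vertices
   adjacent and no repeated vertex; it is non-trivial iff q <> [::]. *)

Section PathSystems.
Variable T : finType.
Variable e : rel T.

Definition is_ntpath (p : seq T) : bool :=
  if p is x :: q then [&& 0 < size q, path e x q & uniq p] else false.

Definition path_system (C : seq (seq T)) : bool :=
  all is_ntpath C && uniq (flatten C).

(* Number of endpoints of p lying in B (a path from B to B counts 2). *)
Definition ends_in (B : {set T}) (p : seq T) : nat :=
  if p is x :: q then (x \in B) + (last x q \in B) else 0.

(* Edge of the reduced multigraph R_U(C) between blocks A and B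
   (some path has one endpoint in A and the other in B). *)
Definition red_adj (P : {set {set T}}) (C : seq (seq T)) : rel {set T} :=
  fun A B => [&& A \in P, B \in P &
    has (fun p => if p is x :: q then
                    ((x \in A) && (last x q \in B)) || ((x \in B) && (last x q \in A))
                  else false) C].

Definition connecting (P : {set {set T}}) (C : seq (seq T)) : Prop :=
  (forall A B, A \in P -> B \in P -> connect (red_adj P C) A B) /\
  (forall B, B \in P -> ~~ odd (\sum_(p <- C) ends_in B p)).

Definition path_edges (p : seq T) : seq (T * T) := zip p (behead p).

Definition n_edges_between (C : seq (seq T)) (A B : {set T}) : nat :=
  \sum_(p <- C) count (fun xy : T * T =>
      ((xy.1 \in A) && (xy.2 \in B)) || ((xy.1 \in B) && (xy.2 \in A)))
    (path_edges p).

End PathSystems.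

(* Main.v *)
Require Import Defs.
From mathcomp Require Import all_boot.
From Stdlib Require Import Classical Lia.
From mathcomp Require Import zify.
Set Implicit Arguments. Unset Strict Implicit. Unset Printing Implicit Defensive.

Section Pieces.
Variable T : finType.

Fixpoint spl (D : pred (T * T)) (x : T) (s : seq T) : seq (seq T) :=
  if s is y :: s' then
    let r := spl D y s' in
    if D (x, y) then [:: x] :: r else (x :: head [::] r) :: behead r
  else [:: [:: x]].

Lemma spl_shape D x s : exists h r, spl D x s = (x :: h) :: r.
Proof.
elim: s x => [|y s IH] x /=; first by exists [::], [::].
have [h [r ->]] := IH y.
by case: (D (x, y)) => /=; [exists [::], ((y :: h) :: r) | exists (y :: h), r].
Qed.

Lemma pe_cons2 (x y : T) s : path_edges (x :: y :: s) = (x, y) :: path_edges (y :: s).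
Proof. by []. Qed.

Lemma flatten_spl D x s : flatten (spl D x s) = x :: s.
Proof.
elim: s x => [|y s IH] x //=.
have := IH y; have [h [r E]] := spl_shape D y s; rewrite E => /= <-.
by case: (D (x, y)).
Qed.

Lemma edges_spl D x s :
  flatten (map (@path_edges T) (spl D x s)) = filter (predC D) (path_edges (x :: s)).
Proof.
elim: s x => [|y s IH] x //=.
have := IH y; have [h [r E]] := spl_shape D y s; rewrite E => /= <-.
by case: (D (x, y)).
Qed.

Lemma spl_cons D x y s : spl D x (y :: s) =
  if D (x, y) then [:: x] :: spl D y s else (x :: head [::] (spl D y s)) :: behead (spl D y s).
Proof. by []. Qed.

Lemma ends_cons (S : {set T}) x s : ends_in S (x :: s) = (x \in S) + (last x s \in S).
Proof. by []. Qed.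

Lemma ends_spl D (S : {set T}) x s :
  \sum_(q <- spl D x s) ends_in S q =
  ends_in S (x :: s) + \sum_(z <- path_edges (x :: s) | D z) ((z.1 \in S) + (z.2 \in S)).
Proof.
elim: s x => [|y s IH] x; first by rewrite /= big_cons big_nil /path_edges /= big_nil.
rewrite pe_cons2 big_cons spl_cons.
have := IH y; have [h [r E]] := spl_shape D y s; rewrite E.
case: (D (x, y)); rewrite !big_cons /= => H; lia.
Qed.

Lemma path_spl (e : rel T) D x s : path e x s ->
  all (fun q => if q is x' :: s' then path e x' s' else false) (spl D x s).
Proof.
elim: s x => [|y s IH] x; first by [].
move=> /andP[exy ps]; have := IH y ps.
have [h [r E]] := spl_shape D y s; rewrite spl_cons E /= => /andP[ph ar].
by case: (D (x, y)) => /=; rewrite ?ph ?exy ?ar.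
Qed.

Lemma eq_spl_in (D D' : pred (T * T)) x s :
  {in path_edges (x :: s), D =1 D'} -> spl D x s = spl D' x s.
Proof.
elim: s x => [|y s IH] x //= H.
rewrite IH; last by move=> z zin; apply: H; rewrite pe_cons2 in_cons zin orbT.
by rewrite H // pe_cons2 mem_head.
Qed.

Lemma mem_pe (u v x : T) s : (u, v) \in path_edges (x :: s) -> (u \in x :: s) /\ (v \in s).
Proof.
elim: s x => [|y s IH] x //.
rewrite pe_cons2 in_cons => /orP[/eqP[-> ->]|/IH[H1 H2]].
  by rewrite !mem_head.
by split; rewrite in_cons ?H1 ?H2 orbT.
Qed.

Lemma split_pe (u v x : T) s : (u, v) \in path_edges (x :: s) ->
  exists s1 s2, s = s1 ++ v :: s2 /\ last x s1 = u.
Proof.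
elim: s x => [|y s IH] x //.
rewrite pe_cons2 in_cons => /orP[/eqP[-> ->]|/IH[s1 [s2 [-> <-]]]].
  by exists [::], s.
by exists (y :: s1), s2.
Qed.

Lemma spl_app D s1 x : exists L0 x' t,
  [/\ spl D x s1 = rcons L0 (x' :: t), last x' t = last x s1 &
   forall y s2, spl D x (s1 ++ y :: s2) =
     if D (last x s1, y) then L0 ++ (x' :: t) :: spl D y s2
     else L0 ++ (x' :: t ++ head [::] (spl D y s2)) :: behead (spl D y s2)].
Proof.
elim: s1 x => [|z s1 IH] x.
  by exists [::], x, [::]; split => // y s2; rewrite cat0s spl_cons /=; case: (D (x, y)).
have [L0 [x' [t [E1 E2 E3]]]] := IH z.
rewrite spl_cons E1.
case Dxz: (D (x, z)).
  exists ([:: x] :: L0), x', t; split => // y s2.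
  by rewrite cat_cons spl_cons Dxz E3 /=; case: (D _).
case: L0 E1 E3 => [|l0 L0] E1 E3.
  exists [::], x, (x' :: t); split => // y s2.
  rewrite cat_cons spl_cons Dxz E3 /=.
  by case: (D (last z s1, y)).
exists ((x :: l0) :: L0), x', t; split => // y s2.
rewrite cat_cons spl_cons Dxz E3 /=.
by case: (D (last z s1, y)).
Qed.

End Pieces.

Section Cut.
Variable T : finType.
Implicit Types (C L : seq (seq T)) (S : {set T}).

Definition pieces (D : pred (T * T)) (p : seq T) := if p is x :: s then spl D x s else [::].
Definition nt (q : seq T) := 1 < size q.
Definition cut (D : seq (T * T)) C :=
  [seq q <- flatten [seq pieces (fun z => z \in D) p | p <- C] | nt q].
Definition E C := flatten [seq path_edges p | p <- C].
Definition degS C S := \sum_(q <- C) ends_in S q.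

Lemma flatten_pieces D C : flatten (flatten [seq pieces D p | p <- C]) = flatten C.
Proof.
elim: C => //= p C IH; rewrite flatten_cat IH; congr (_ ++ _).
by case: p => //= x s; rewrite flatten_spl.
Qed.

Lemma subseq_flatten_filter (a : pred (seq T)) L : subseq (flatten (filter a L)) (flatten L).
Proof.
elim: L => //= q L IH; case: (a q) => /=.
  by rewrite cat_subseq ?subseq_refl.
exact: (subseq_trans IH (suffix_subseq _ _)).
Qed.

Lemma uniq_mem_flatten q L : q \in L -> uniq (flatten L) -> uniq q.
Proof.
elim: L => //= q' L IH; rewrite in_cons cat_uniq => /orP[/eqP->|qL] /and3P[u1 _ u2] //.
exact: IH.
Qed.

Lemma mem_cut D C q : q \in cut D C ->
  nt q /\ exists x s, x :: s \in C /\ q \in spl (fun z => z \in D) x s.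
Proof.
rewrite mem_filter => /andP[ntq /flattenP[ps /mapP[p pC ->] qin]]; split => //.
by case: p pC qin => // x s pC qin; exists x, s.
Qed.

Lemma ps_cut (e : rel T) D C : path_system e C -> path_system e (cut D C).
Proof.
move=> /andP[/allP aC uC]; apply/andP; split; last first.
  apply: subseq_uniq uC; rewrite -(flatten_pieces (fun z => z \in D) C).
  exact: subseq_flatten_filter.
have uc : uniq (flatten (cut D C)).
  apply: subseq_uniq uC; rewrite -(flatten_pieces (fun z => z \in D) C).
  exact: subseq_flatten_filter.
apply/allP => q qin; have uq := uniq_mem_flatten qin uc.
have [ntq [x [s [pC qs]]]] := mem_cut qin.
have /andP[_ /andP[pth _]] := aC _ pC.
have /allP/(_ q qs) := path_spl (fun z => z \in D) pth.
case: q ntq {qin qs} uq => // x' s' ntq uq pq.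
by apply/and3P; split.
Qed.

Lemma E_cons p C : E (p :: C) = path_edges p ++ E C.
Proof. by []. Qed.

Lemma E_cat C1 C2 : E (C1 ++ C2) = E C1 ++ E C2.
Proof. by rewrite /E map_cat flatten_cat. Qed.

Lemma E_filter_nt L : E (filter nt L) = E L.
Proof.
elim: L => //= q L IH; case: ifP => ntq; rewrite ?E_cons IH //.
by case: q ntq => // x [|y s].
Qed.

Lemma E_cut D C : E (cut D C) = filter (predC (fun z => z \in D)) (E C).
Proof.
rewrite /cut E_filter_nt; elim: C => // p C IH.
rewrite /= E_cat IH E_cons filter_cat; congr (_ ++ _).
by case: p => // x s; rewrite /E edges_spl.
Qed.

Lemma degS_pieces D C S :
  degS (flatten [seq pieces D p | p <- C]) S =
  degS C S + \sum_(z <- E C | D z) ((z.1 \in S) + (z.2 \in S)).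
Proof.
elim: C => [|p C IH]; first by rewrite /degS /E /= !big_nil.
rewrite /degS in IH *; rewrite /= big_cat /= IH big_cons E_cons big_cat /=.
case: p => [|x s] /=; first by rewrite big_nil /path_edges /= big_nil; lia.
rewrite ends_spl ends_cons; lia.
Qed.

Lemma sum_even_odd (I : eqType) (r : seq I) (F : I -> nat) :
  (forall i, i \in r -> ~~ odd (F i)) -> ~~ odd (\sum_(i <- r) F i).
Proof.
elim: r => [|i r IH] H; first by rewrite big_nil.
rewrite big_cons oddD (negbTE (H i (mem_head _ _))) /=.
by apply: IH => j jr; apply: H; rewrite in_cons jr orbT.
Qed.

Lemma odd_filter_nt L S : odd (degS (filter nt L) S) = odd (degS L S).
Proof.
rewrite /degS big_filter [in RHS](bigID nt) /= oddD.
have -> : odd (\sum_(i <- L | ~~ nt i) ends_in S i) = false; last by rewrite addbF.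
apply/negbTE; rewrite -big_filter; apply: sum_even_odd => q; rewrite mem_filter => /andP[]; case: q => // x [|y s] //= _ _.
by rewrite oddD addbb.
Qed.

Lemma par_cut D C S :
  odd (degS (cut D C) S) =
  odd (degS C S) (+) odd (\sum_(z <- E C | z \in D) ((z.1 \in S) + (z.2 \in S))).
Proof. by rewrite /cut odd_filter_nt degS_pieces oddD. Qed.

End Cut.
Arguments nt {T} q.

Section Part.
Variables (T : finType) (P : {set {set T}}).
Hypothesis hP : partition P [set: T].
Implicit Types (C L : seq (seq T)) (S : {set T}).

Lemma triv : trivIset P.
Proof. by case/and3P: hP. Qed.

Lemma pbP (v : T) : pblock P v \in P.
Proof. by case/and3P: hP => /eqP cv _ _; apply: pblock_mem; rewrite cv inE. Qed.

Lemma in_pb (v : T) : v \in pblock P v.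
Proof. by case/and3P: hP => /eqP cv _ _; rewrite mem_pblock cv inE. Qed.

Lemma blk_nonempty A : A \in P -> exists a, a \in A.
Proof.
case/and3P: hP => _ _ nz AP; apply/set0Pn; apply/negP => /eqP A0.
by rewrite -A0 AP in nz.
Qed.

Definition sat S := forall A, A \in P -> forall u v, u \in A -> v \in A -> (u \in S) = (v \in S).

Lemma sub_sat S A x : sat S -> A \in P -> x \in A -> (A \subset S) = (x \in S).
Proof.
move=> sS AP xA; apply/subsetP/idP => [H|xS v vA]; first exact: H.
by rewrite (sS A AP v x vA xA).
Qed.

Lemma sat_compl S : sat S -> sat (~: S).
Proof. by move=> sS A AP u v uA vA; rewrite !inE (sS A AP u v). Qed.

Lemma sat_setI S1 S2 : sat S1 -> sat S2 -> sat (S1 :&: S2).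
Proof. by move=> s1 s2 A AP u v uA vA; rewrite !inE (s1 A AP u v) ?(s2 A AP u v). Qed.

Lemma block_sat B : B \in P -> sat B.
Proof.
move=> BP A AP u v uA vA.
have tP := triv.
apply/idP/idP => H.
  by rewrite -(def_pblock tP BP H) (def_pblock tP AP uA) -(def_pblock tP AP vA) in_pb.
by rewrite -(def_pblock tP BP H) (def_pblock tP AP vA) -(def_pblock tP AP uA) in_pb.
Qed.

Definition cross C S := has (fun q => ends_in S q == 1) C.

Lemma ends_compl S q : (ends_in (~: S) q == 1) = (ends_in S q == 1).
Proof. by case: q => // x s; rewrite !ends_cons !inE; case: (x \in S); case: (_ \in S). Qed.

Lemma cross_compl C S : cross C (~: S) = cross C S.
Proof. by apply: eq_has => q; rewrite ends_compl. Qed.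

Lemma conn_cross C S u v :
  (forall A B, A \in P -> B \in P -> connect (red_adj P C) A B) ->
  sat S -> u \in S -> v \notin S -> cross C S.
Proof.
move=> Hc sS uS vS; apply: contraT => ncr.
have cl : forall Z Z', red_adj P C Z Z' -> (Z \subset S) = (Z' \subset S).
  move=> Z Z' /and3P[ZP Z'P /hasP[q qC]]; case: q qC => // x s qC H.
  have := hasPn ncr _ qC; rewrite ends_cons.
  case/orP: H => /andP[H1 H2].
    by rewrite (sub_sat sS ZP H1) (sub_sat sS Z'P H2); case: (x \in S); case: (_ \in S).
  by rewrite (sub_sat sS ZP H2) (sub_sat sS Z'P H1); case: (x \in S); case: (_ \in S).
have : connect (red_adj P C) (pblock P u) (pblock P v) by apply: Hc; apply: pbP.
move/connectP => [pth pp lp].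
have : (pblock P u \subset S) = (pblock P v \subset S).
  rewrite lp; elim: pth (pblock P u) pp {lp} => //= Z1 pth IH Z /andP[h1 h2].
  by rewrite (cl _ _ h1); apply: IH.
by rewrite (sub_sat sS (pbP u) (in_pb u)) (sub_sat sS (pbP v) (in_pb v)) uS (negbTE vS).
Qed.

Lemma cross_conn C :
  (forall S, sat S -> (exists u, u \in S) -> (exists v, v \notin S) -> cross C S) ->
  forall A B, A \in P -> B \in P -> connect (red_adj P C) A B.
Proof.
move=> H A B AP BP; apply: contraT => nAB.
have tP := triv.
pose S := [set v | connect (red_adj P C) A (pblock P v)].
have sS : sat S.
  by move=> Z ZP u v uZ vZ; rewrite !inE (def_pblock tP ZP uZ) (def_pblock tP ZP vZ).
have [a aA] := blk_nonempty AP; have [b bB] := blk_nonempty BP.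
have ex1 : exists u, u \in S by exists a; rewrite inE (def_pblock tP AP aA).
have ex2 : exists v, v \notin S by exists b; rewrite inE (def_pblock tP BP bB).
have /hasP[q qC /eqP] := H S sS ex1 ex2.
case: q qC => [//|x s] qC.
rewrite ends_cons !inE.
have r1 : red_adj P C (pblock P x) (pblock P (last x s)).
  apply/and3P; split; try exact: pbP.
  by apply/hasP; exists (x :: s) => //=; rewrite !in_pb.
have e1 : connect (red_adj P C) A (pblock P x) = connect (red_adj P C) A (pblock P (last x s)).
  apply/idP/idP => h; first exact: (connect_trans h (connect1 r1)).
  have r2 : red_adj P C (pblock P (last x s)) (pblock P x).
    apply/and3P; split; try exact: pbP.
    by apply/hasP; exists (x :: s) => //=; rewrite !in_pb orbT.
  exact: (connect_trans h (connect1 r2)).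
by rewrite e1; case: (connect _ _ _).
Qed.

Lemma pt_sum S (v : T) : sat S ->
  ((v \in S) : nat) = \sum_(B in P | B \subset S) (v \in B).
Proof.
move=> sS; have tP := triv.
case vS: (v \in S).
  rewrite (bigD1 (pblock P v)); last by rewrite pbP (sub_sat sS (pbP v) (in_pb v)).
  rewrite in_pb big1 //= => B /andP[/andP[BP _] neq].
  apply/eqP; rewrite eqb0; apply/negP => vB.
  by rewrite -(def_pblock tP BP vB) eqxx in neq.
rewrite big1 // => B /andP[BP BS]; apply/eqP; rewrite eqb0; apply/negP => vB.
by rewrite (subsetP BS v vB) in vS.
Qed.

Lemma even_sat C S :
  (forall B, B \in P -> ~~ odd (\sum_(p <- C) ends_in B p)) -> sat S -> ~~ odd (degS C S).
Proof.
move=> Hp sS.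
have -> : degS C S = \sum_(q <- C) \sum_(B in P | B \subset S) ends_in B q.
  apply: eq_bigr => q _; case: q => [|x s]; first by rewrite big1.
  by rewrite ends_cons (pt_sum x sS) (pt_sum (last x s) sS) -big_split.
rewrite exchange_big /= -big_filter; apply: sum_even_odd => B.
by rewrite mem_filter => /andP[/andP[BP _] _]; apply: Hp.
Qed.

Lemma odd_sum_has (I : eqType) (r : seq I) (F : I -> nat) :
  odd (\sum_(i <- r) F i) -> exists2 i, i \in r & odd (F i).
Proof.
elim: r => [|i r IH]; rewrite ?big_nil ?big_cons // oddD.
case Fi: (odd (F i)) => /= H; first by exists i; rewrite ?mem_head.
by have [j jr oj] := IH H; exists j => //; rewrite in_cons jr orbT.
Qed.

End Part.

Section More.
Variable T : finType.
Implicit Types (C L : seq (seq T)) (S : {set T}).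

Lemma cross_cut D C S : (forall z, z \in D -> (z.1 \in S) = (z.2 \in S)) ->
  cross C S -> cross (cut D C) S.
Proof.
move=> HD /hasP[p pC /eqP ep]; case: p pC ep => [|x s] // pC ep.
have : odd (\sum_(q <- spl (fun z => z \in D) x s) ends_in S q).
  rewrite ends_spl oddD ep /= -big_filter; apply: sum_even_odd => z; rewrite mem_filter => /andP[zD _].
  by rewrite (HD z zD) oddD addbb.
move/odd_sum_has => [q qin oq]; apply/hasP; exists q.
  rewrite mem_filter; apply/andP; split.
    case: q oq {qin} => [|x' [|y' s']] //=; by rewrite oddD addbb.
  by apply/flattenP; exists (spl (fun z => z \in D) x s) => //; apply/mapP; exists (x :: s).
case: q oq {qin} => [|x' s'] //; rewrite ends_cons.
by case: (x' \in S); case: (_ \in S).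
Qed.

Lemma subseq_unzip1 (s : seq T) (t : seq T) : subseq (unzip1 (zip s t)) s.
Proof.
elim: s t => [|x s IH] [|y t]; rewrite ?sub0seq //.
by rewrite /= eqxx IH.
Qed.

Lemma subseq_unzip2 (s : seq T) (t : seq T) : subseq (unzip2 (zip s t)) t.
Proof.
elim: s t => [|x s IH] [|y t]; rewrite ?sub0seq //.
by rewrite /= eqxx IH.
Qed.

Lemma uniq_flatten_sub (f : seq T -> seq T) C :
  uniq (flatten C) -> (forall p, subseq (f p) p) -> uniq (flatten (map f C)).
Proof.
move=> uC Hf; elim: C uC => //= p C IH; rewrite !cat_uniq => /and3P[up hp uc].
rewrite (subseq_uniq (Hf p) up) IH // andbT.
apply/hasPn => x /flattenP[q /mapP[p' p'C ->] xq]; apply/negP => xf.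
have xp := mem_subseq (Hf p) xf; have xp' := mem_subseq (Hf p') xq.
have xC : x \in flatten C by apply/flattenP; exists p'.
by move/hasPn: hp => /(_ x xC); rewrite xp.
Qed.

Lemma uniq_E_fst (e : rel T) C : path_system e C -> uniq (map fst (E C)).
Proof.
case/andP => _ uC; rewrite /E map_flatten -map_comp.
apply: uniq_flatten_sub uC _ => p /=; exact: subseq_unzip1.
Qed.

Lemma uniq_E_snd (e : rel T) C : path_system e C -> uniq (map snd (E C)).
Proof.
case/andP => _ uC; rewrite /E map_flatten -map_comp.
apply: uniq_flatten_sub uC _ => p /=.
apply: subseq_trans (subseq_unzip2 _ _) _; case: p => //= x s.
exact: subseq_cons.
Qed.

Lemma uniq_E (e : rel T) C : path_system e C -> uniq (E C).
Proof. by move=> ps; have := uniq_E_fst ps => /map_uniq. Qed.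

Lemma uniq_map_inj (A B : eqType) (f : A -> B) (s : seq A) x y :
  uniq (map f s) -> x \in s -> y \in s -> f x = f y -> x = y.
Proof.
elim: s => //= a s IH /andP[nf us]; rewrite !in_cons.
case/orP => [/eqP->|xs]; case/orP => [/eqP->|ys] //.
- by move=> E; rewrite E map_f in nf.
- by move=> E; rewrite -E map_f in nf.
- exact: IH.
Qed.

Lemma ps_uniq (e : rel T) C : path_system e C -> uniq C.
Proof.
case/andP => aC; elim: C aC => //= q C IH /andP[nq aC]; rewrite cat_uniq => /and3P[_ hq uc].
rewrite IH // andbT; apply/negP => qC.
case: q nq hq qC => // x s _ hq qC.
have xC : x \in flatten C by apply/flattenP; exists (x :: s); rewrite ?mem_head.
by move/hasPn: hq => /(_ x xC); rewrite mem_head.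
Qed.

Lemma sum_mem (I : eqType) (r D : seq I) (F : I -> nat) :
  uniq r -> uniq D -> {subset D <= r} -> \sum_(z <- r | z \in D) F z = \sum_(z <- D) F z.
Proof.
move=> ur uD sD; rewrite -big_filter; apply: perm_big; apply: uniq_perm.
- exact: filter_uniq.
- exact: uD.
by move=> z; rewrite mem_filter; apply/andP/idP => [[]//|zD]; split => //; apply: sD.
Qed.

End More.

Section Refine.
Variable T : finType.
Implicit Types (C L : seq (seq T)) (S : {set T}).

Lemma refine (e : rel T) D C (f : T * T) : path_system e C -> f \in E C -> f \notin D ->
  exists X Y lb ra, [/\ cut D C = filter nt (X ++ (lb ++ ra) :: Y),
     cut (f :: D) C = filter nt (X ++ lb :: ra :: Y),
     (exists x' t, lb = x' :: t /\ last x' t = f.1) &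
     (exists h, ra = f.2 :: h)].
Proof.
move=> ps fE fD.
have uE := uniq_E ps.
case/andP: ps => aC uC.
case/flattenP: fE => ps /mapP[p pC Eps]; rewrite Eps {ps Eps} => fp.
case/splitPr: pC aC uC uE => C1 C2 aC uC uE.
case: f fD fp => u v fD fp /=.
case: p fp aC uC uE => [//|x0 s] fp aC uC uE.
have [s1 [s2 [Es lu]]] := split_pe fp.
have : is_ntpath e (x0 :: s) by apply: (allP aC); rewrite mem_cat mem_head orbT.
case/and3P => _ _ up.
have up' : uniq ((x0 :: s1) ++ (v :: s2)) by rewrite cat_cons -Es.
move: up'; rewrite cat_uniq => /and3P[_ hdis _].
have vs1 : v \notin s1.
  apply/negP => vs; move/hasPn: hdis => /(_ v (mem_head _ _)).
  by rewrite in_cons vs orbT.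
have uvs2 : u \notin v :: s2.
  apply/negP => us; move/hasPn: hdis => /(_ u us).
  by rewrite -lu mem_last.
rewrite E_cat E_cons !cat_uniq in uE; case/and4P: uE => _ h1 _ /andP[h2 _].
have nE1 : (u, v) \notin E C1.
  apply/negP => H; move/hasPn: h1 => /(_ (u, v)); rewrite mem_cat fp /=.
  by move=> /(_ isT); rewrite H.
have nE2 : (u, v) \notin E C2.
  by apply/negP => H; move/hasPn: h2 => /(_ (u, v) H); rewrite fp.
have same : forall q, q \in C1 ++ C2 ->
    pieces (fun z => z \in (u, v) :: D) q = pieces (fun z => z \in D) q.
  move=> q qC; case: q qC => // x s' qC /=; apply: eq_spl_in => z zq.
  rewrite in_cons; case: eqP => //= zuv; rewrite zuv in zq.
  move: qC; rewrite mem_cat => /orP[] qC.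
    by move: nE1; rewrite /E; move/negP; case; apply/flattenP; exists (path_edges (x :: s')) => //; apply: map_f.
  by move: nE2; rewrite /E; move/negP; case; apply/flattenP; exists (path_edges (x :: s')) => //; apply: map_f.
have [L0 [x' [t [E1 E2 E3]]]] := spl_app (fun z => z \in D) s1 x0.
have [L0' [x'' [t' [E1' E2' E3']]]] := spl_app (fun z => z \in (u, v) :: D) s1 x0.
have eq01 : spl (fun z => z \in (u, v) :: D) x0 s1 = spl (fun z => z \in D) x0 s1.
  apply: eq_spl_in => z zq; rewrite in_cons; case: eqP => //= zuv.
  by rewrite zuv in zq; have [_ vs] := mem_pe zq; rewrite vs in vs1.
rewrite E1 E1' in eq01; case: (rcons_inj eq01) => EL0 Ex Et.
have eq02 : spl (fun z => z \in (u, v) :: D) v s2 = spl (fun z => z \in D) v s2.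
  apply: eq_spl_in => z zq; rewrite in_cons; case: eqP => //= zuv.
  by rewrite zuv in zq; have [us _] := mem_pe zq; rewrite us in uvs2.
have [h [r Er]] := spl_shape (fun z => z \in D) v s2.
have P0 : pieces (fun z => z \in D) (x0 :: s) = L0 ++ (x' :: t ++ v :: h) :: r.
  by rewrite /= Es E3 lu (negbTE fD) Er.
have P1 : pieces (fun z => z \in (u, v) :: D) (x0 :: s) = L0 ++ (x' :: t) :: (v :: h) :: r.
  by rewrite /= Es E3' lu mem_head eq02 Er EL0 Ex Et.
exists (flatten [seq pieces (fun z => z \in D) p | p <- C1] ++ L0),
  (r ++ flatten [seq pieces (fun z => z \in D) p | p <- C2]), (x' :: t), (v :: h).
have fc : forall (a : seq (seq T)) (L : seq (seq (seq T))), flatten (a :: L) = a ++ flatten L by [].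
have m1 : [seq pieces (fun z => z \in (u, v) :: D) p | p <- C1] =
          [seq pieces (fun z => z \in D) p | p <- C1].
  by apply/eq_in_map => q qC; apply: same; rewrite mem_cat qC.
have m2 : [seq pieces (fun z => z \in (u, v) :: D) p | p <- C2] =
          [seq pieces (fun z => z \in D) p | p <- C2].
  by apply/eq_in_map => q qC; apply: same; rewrite mem_cat qC orbT.
split.
- by rewrite /cut map_cat flatten_cat map_cons fc P0 -!catA; congr (filter _ (_ ++ _)); rewrite -?catA.
- by rewrite /cut map_cat flatten_cat map_cons fc P1 m1 m2 -!catA; congr (filter _ (_ ++ _)); rewrite -?catA.
- by exists x', t; rewrite E2 lu.
- by exists h.
Qed.

End Refine.

Section Main.
Variables (T : finType) (e : rel T) (P : {set {set T}}).
Hypothesis hP : partition P [set: T].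
Variables (A B : {set T}).
Hypotheses (AP : A \in P) (BP : B \in P) (AB : A != B).
Implicit Types (L : seq (seq T)) (S : {set T}).

Definition pr (z : T * T) := ((z.1 \in A) && (z.2 \in B)) || ((z.1 \in B) && (z.2 \in A)).

Lemma pr_sum z S : sat P S -> pr z ->
  (z.1 \in S) + (z.2 \in S) = (A \subset S) + (B \subset S).
Proof.
move=> sS /orP[]/andP[h1 h2].
  by rewrite (sub_sat sS AP h1) (sub_sat sS BP h2).
by rewrite (sub_sat sS AP h2) (sub_sat sS BP h1) addnC.
Qed.

Lemma pr_eq z S : sat P S -> pr z -> (A \subset S) = (B \subset S) -> (z.1 \in S) = (z.2 \in S).
Proof.
move=> sS /orP[]/andP[h1 h2].
  by rewrite (sub_sat sS AP h1) (sub_sat sS BP h2).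
by rewrite (sub_sat sS AP h2) (sub_sat sS BP h1).
Qed.

Lemma triv_ends (q : seq T) S : ~~ nt q -> ends_in S q != 1.
Proof. by case: q => // x [|y s] // _; rewrite ends_cons /=; case: (x \in S). Qed.

Record data (f : T * T) S (g0 : seq T) L : Prop := Data {
  d_sat : sat P S;
  d_A : forall v, v \in A -> v \in S;
  d_B : forall v, v \in B -> v \notin S;
  d_mem : g0 \in L;
  d_end : ends_in S g0 = 1;
  d_uniq : forall q, q \in L -> ends_in S q = 1 -> q = g0;
  d_shape : (exists x s, g0 = x :: s /\ last x s = f.1) \/ (exists s, g0 = f.2 :: s) }.

Variable C : seq (seq T).
Hypotheses (hps : path_system e C) (hcon : connecting P C).

Lemma par_two g h : g \in E C -> h \in E C -> g != h -> pr g -> pr h ->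
  forall Z, Z \in P -> ~~ odd (\sum_(p <- cut [:: g; h] C) ends_in Z p).
Proof.
move=> gE hE gh pg ph Z ZP.
have := par_cut [:: g; h] C Z; rewrite /degS => ->.
rewrite (negbTE (hcon.2 Z ZP)) /=.
rewrite sum_mem ?(uniq_E hps) //; last first.
  - by move=> z; rewrite !inE => /orP[]/eqP->.
  - by rewrite /= inE gh.
rewrite !big_cons big_nil addn0 (pr_sum (block_sat hP ZP) pg) (pr_sum (block_sat hP ZP) ph).
by rewrite addnn odd_double.
Qed.

Lemma one_side f g h : f \in E C -> g \in E C -> h \in E C -> pr f -> pr g -> pr h ->
  uniq [:: f; g; h] -> ~ connecting P (cut [:: g; h] C) ->
  exists S g0, data f S g0 (cut [:: f; g; h] C).
Proof.
move=> fE gE hE pf pg ph uf ncon.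
have gh : g != h by move: uf; rewrite /= !inE => /and3P[_ ->].
have fgh : f \notin [:: g; h] by move: uf => /= /andP[].
have npar := par_two gE hE gh pg ph.
have [S [sS [u uS] [v vS] ncr]] : exists S, [/\ sat P S, (exists u, u \in S),
    (exists v, v \notin S) & ~~ cross (cut [:: g; h] C) S].
  apply: NNPP => H; apply: ncon; split => //; apply: (cross_conn hP) => S sS ex1 ex2.
  by apply: contraT => ncr; exfalso; apply: H; exists S.
have sep : (A \subset S) != (B \subset S).
  apply/negP => /eqP eqAB; apply: (negP ncr); apply: cross_cut.
    by move=> z; rewrite !inE => /orP[]/eqP->; apply: pr_eq.
  exact: (conn_cross hP hcon.1 sS uS vS).
have [S' [sS' AS' BS' ncr']] : exists S', [/\ sat P S', (forall v, v \in A -> v \in S'),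
    (forall v, v \in B -> v \notin S') & ~~ cross (cut [:: g; h] C) S'].
  case AS: (A \subset S); move: sep; rewrite AS => BS.
    exists S; split => //.
      by move=> w wA; rewrite -(sub_sat sS AP wA) AS.
    by move=> w wB; rewrite -(sub_sat sS BP wB); move: BS; case: (B \subset S).
  exists (~: S); split; first exact: sat_compl.
  - by move=> w wA; rewrite inE -(sub_sat sS AP wA) AS.
  - by move=> w wB; rewrite inE -(sub_sat sS BP wB) negbK; move: BS; case: (B \subset S).
  - by rewrite cross_compl.
clear S sS u uS v vS ncr sep.
have [X [Y [lb [ra [E1 E2 [x' [t [Elb Llb]]] [hh Era]]]]]] := refine hps fE fgh.
have nc1 : forall q, q \in cut [:: g; h] C -> ends_in S' q != 1 by apply/hasPn.
have ncXY : forall q, (q \in X) || (q \in Y) -> ends_in S' q != 1.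
  move=> q qXY; case ntq: (nt q); last by apply: triv_ends; rewrite ntq.
  by apply: nc1; rewrite E1 mem_filter ntq mem_cat in_cons; case/orP: qXY => ->; rewrite ?orbT.
have nclr : ends_in S' (lb ++ ra) != 1.
  apply: nc1; rewrite E1 mem_filter mem_cat in_cons eqxx orbT andbT Elb Era.
  by rewrite /nt size_cat /= addnS.
have f12 : (f.1 \in S') + (f.2 \in S') = 1.
  case/orP: pf => /andP[h1 h2].
    by rewrite (AS' _ h1) (negbTE (BS' _ h2)).
  by rewrite (AS' _ h2) (negbTE (BS' _ h1)).
have elb : ends_in S' lb = (x' \in S') + (f.1 \in S') by rewrite Elb ends_cons Llb.
have era : ends_in S' ra = (f.2 \in S') + (last f.2 hh \in S') by rewrite Era ends_cons.
have elr : ends_in S' (lb ++ ra) = (x' \in S') + (last f.2 hh \in S').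
  by rewrite Elb Era cat_cons ends_cons last_cat.
have memE2 : forall q, q \in cut [:: f; g; h] C -> [|| q \in X, q \in Y, q == lb | q == ra].
  move=> q; rewrite E2 mem_filter mem_cat !in_cons => /andP[_].
  by case/or4P => ->; rewrite ?orbT.
rewrite elr in nclr.
have ntlb : forall S0, ends_in S0 lb = 1 -> nt lb.
  by move=> S0 H; apply: contraT => /(triv_ends S0); rewrite H.
have ntra : forall S0, ends_in S0 ra = 1 -> nt ra.
  by move=> S0 H; apply: contraT => /(triv_ends S0); rewrite H.
move: elb era f12 nclr; case: (x' \in S'); case: (f.1 \in S'); case: (f.2 \in S');
  case: (last f.2 hh \in S') => //= elb era _ _.
- exists S', ra; split => //.
  + by rewrite E2 mem_filter (ntra S') ?era // mem_cat !in_cons eqxx !orbT.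
  + move=> q qC eq1; case/or4P: (memE2 q qC) => [qX|qY|/eqP qlb|/eqP ->] //.
    * by move: (ncXY q); rewrite qX eq1 => /(_ isT).
    * by move: (ncXY q); rewrite qY orbT eq1 => /(_ isT).
    * by rewrite qlb elb in eq1.
  + by right; exists hh.
- exists S', lb; split => //.
  + by rewrite E2 mem_filter (ntlb S') ?elb // mem_cat !in_cons eqxx !orbT.
  + move=> q qC eq1; case/or4P: (memE2 q qC) => [qX|qY|/eqP ->|/eqP qra] //.
    * by move: (ncXY q); rewrite qX eq1 => /(_ isT).
    * by move: (ncXY q); rewrite qY orbT eq1 => /(_ isT).
    * by rewrite qra era in eq1.
  + by left; exists x', t.
- exists S', lb; split => //.
  + by rewrite E2 mem_filter (ntlb S') ?elb // mem_cat !in_cons eqxx !orbT.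
  + move=> q qC eq1; case/or4P: (memE2 q qC) => [qX|qY|/eqP ->|/eqP qra] //.
    * by move: (ncXY q); rewrite qX eq1 => /(_ isT).
    * by move: (ncXY q); rewrite qY orbT eq1 => /(_ isT).
    * by rewrite qra era in eq1.
  + by left; exists x', t.
- exists S', ra; split => //.
  + by rewrite E2 mem_filter (ntra S') ?era // mem_cat !in_cons eqxx !orbT.
  + move=> q qC eq1; case/or4P: (memE2 q qC) => [qX|qY|/eqP qlb|/eqP ->] //.
    * by move: (ncXY q); rewrite qX eq1 => /(_ isT).
    * by move: (ncXY q); rewrite qY orbT eq1 => /(_ isT).
    * by rewrite qlb elb in eq1.
  + by right; exists hh.
Qed.

Definition hasend (Z : {set T}) (q : seq T) :=
  if q is x :: s then (x \in Z) || (last x s \in Z) else false.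

Lemma eq_cut (D D' : seq (T * T)) L : D =i D' -> cut D L = cut D' L.
Proof.
move=> H; rewrite /cut; congr (filter _ (flatten _)); apply: eq_map => p.
by case: p => // x s /=; apply: eq_spl_in => z _; rewrite H.
Qed.

Lemma combine L S1 S2 g1 g2 : uniq L -> g1 \in L -> g2 \in L -> g1 != g2 ->
  ends_in S1 g1 = 1 -> ends_in S2 g2 = 1 ->
  (forall q, q \in L -> ends_in S1 q = 1 -> q = g1) ->
  (forall q, q \in L -> ends_in S2 q = 1 -> q = g2) ->
  hasend (S1 :&: S2) g1 -> hasend (S1 :&: S2) g2 -> ~~ odd (degS L (S1 :&: S2)).
Proof.
move=> uL g1L g2L n12 e1 e2 u1 u2 h1 h2.
have one : forall q S S', ends_in S q = 1 -> hasend (S :&: S') q -> ends_in (S :&: S') q = 1.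
  move=> q S S'; case: q => // x s; rewrite !ends_cons /= !inE.
  by case: (x \in S); case: (x \in S'); case: (last x s \in S); case: (last x s \in S').
have one' : forall q S S', ends_in S' q = 1 -> hasend (S :&: S') q -> ends_in (S :&: S') q = 1.
  move=> q S S'; case: q => // x s; rewrite !ends_cons /= !inE.
  by case: (x \in S); case: (x \in S'); case: (last x s \in S); case: (last x s \in S').
have ev : forall q S S', ends_in S q != 1 -> ends_in S' q != 1 -> ~~ odd (ends_in (S :&: S') q).
  move=> q S S'; case: q => // x s; rewrite !ends_cons !inE.
  by case: (x \in S); case: (x \in S'); case: (last x s \in S); case: (last x s \in S').
rewrite /degS (bigD1_seq g1) //= -big_filter (bigD1_seq g2) ?filter_uniq //; last first.
  by rewrite mem_filter eq_sym n12.
rewrite -big_filter oddD (one _ _ _ e1 h1) /= oddD (one' _ _ _ e2 h2) /= negbK.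
apply: sum_even_odd => q; rewrite !mem_filter => /andP[nq2 /andP[nq1 qL]].
apply: ev; apply/eqP => H.
  by rewrite (u1 q qL H) eqxx in nq1.
by rewrite (u2 q qL H) eqxx in nq2.
Qed.

Lemma pr_one z S : (forall v, v \in A -> v \in S) -> (forall v, v \in B -> v \notin S) ->
  pr z -> (z.1 \in S) + (z.2 \in S) = 1.
Proof.
move=> HA HB /orP[]/andP[h1 h2].
  by rewrite (HA _ h1) (negbTE (HB _ h2)).
by rewrite (HA _ h2) (negbTE (HB _ h1)).
Qed.

Lemma pr_one' z S : (forall v, v \in B -> v \in S) -> (forall v, v \in A -> v \notin S) ->
  pr z -> (z.1 \in S) + (z.2 \in S) = 1.
Proof.
move=> HB HA /orP[]/andP[h1 h2].
  by rewrite (HB _ h2) (negbTE (HA _ h1)).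
by rewrite (HB _ h1) (negbTE (HA _ h2)).
Qed.

Section Three.
Variables f1 f2 f3 : T * T.
Hypotheses (f1E : f1 \in E C) (f2E : f2 \in E C) (f3E : f3 \in E C).
Hypotheses (p1 : pr f1) (p2 : pr f2) (p3 : pr f3).
Hypothesis u123 : uniq [:: f1; f2; f3].

Let L := cut [:: f1; f2; f3] C.

Lemma uniqL : uniq L.
Proof. exact: (ps_uniq (ps_cut _ hps)). Qed.

Lemma oddL S : sat P S ->
  ((forall v, v \in A -> v \in S) /\ (forall v, v \in B -> v \notin S)) \/
  ((forall v, v \in B -> v \in S) /\ (forall v, v \in A -> v \notin S)) ->
  odd (degS L S).
Proof.
move=> sS H; rewrite /L par_cut (negbTE (even_sat hP hcon.2 sS)) /=.
rewrite sum_mem ?(uniq_E hps) //; last first.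
  by move=> z; rewrite !inE => /or3P[]/eqP->.
rewrite !big_cons big_nil.
case: H => [[HA HB]|[HB HA]].
  by rewrite !(pr_one HA HB).
by rewrite !(pr_one' HB HA).
Qed.

Definition shL (f : T * T) (g : seq T) := exists x s, g = x :: s /\ last x s = f.1.
Definition shH (f : T * T) (g : seq T) := exists s, g = f.2 :: s.

Lemma same_shape fa fb g : fa \in E C -> fb \in E C -> fa != fb ->
  (shL fa g /\ shL fb g) \/ (shH fa g /\ shH fb g) -> False.
Proof.
move=> faE fbE nab [[[x [s [-> la]]] [x' [s' [[<- <-] lb]]]]|[[s ->] [s' [eb _]]]].
  move/eqP: nab; apply; apply: (uniq_map_inj (uniq_E_fst hps)) => //.
  by rewrite -la -lb.
move/eqP: nab; apply; exact: (uniq_map_inj (uniq_E_snd hps)).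
Qed.

Lemma hasend_sub (Z Z' : {set T}) q : {subset Z <= Z'} -> hasend Z q -> hasend Z' q.
Proof. by move=> H; case: q => // x s /= /orP[] /H ->; rewrite ?orbT. Qed.

Lemma pair_contra fa fb Sa Sb ga gb : data fa Sa ga L -> data fb Sb gb L -> ga != gb ->
  (hasend A ga /\ hasend A gb) \/ (hasend B ga /\ hasend B gb) -> False.
Proof.
move=> [sa Aa Ba ma ea ua _] [sb Ab Bb mb eb ub _] nab [[ha hb]|[ha hb]].
  have sub : {subset A <= Sa :&: Sb} by move=> v vA; rewrite inE Aa ?Ab.
  have := oddL (sat_setI sa sb).
  have -> : odd (degS L (Sa :&: Sb)) = false.
    apply/negbTE; apply: (combine uniqL ma mb nab ea eb ua ub).
      exact: hasend_sub sub ha.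
    exact: hasend_sub sub hb.
  move=> H; suff : false by []; apply: H; left; split => v vv; first exact: sub.
  by rewrite inE (negbTE (Ba v vv)).
have sub : {subset B <= ~: Sa :&: ~: Sb} by move=> v vB; rewrite !inE Ba ?Bb.
have := oddL (sat_setI (sat_compl sa) (sat_compl sb)).
have -> : odd (degS L (~: Sa :&: ~: Sb)) = false.
  apply/negbTE; apply: (combine uniqL ma mb nab).
  - by apply/eqP; rewrite ends_compl ea.
  - by apply/eqP; rewrite ends_compl eb.
  - by move=> q qL /eqP; rewrite ends_compl => /eqP; apply: ua.
  - by move=> q qL /eqP; rewrite ends_compl => /eqP; apply: ub.
  - exact: hasend_sub sub ha.
  exact: hasend_sub sub hb.
move=> H; suff : false by []; apply: H; right; split => v vv; first exact: sub.
by rewrite !inE (Aa v vv).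
Qed.

Lemma n12 : f1 != f2. Proof. by move: u123; rewrite /= !inE => /and3P[/norP[]]. Qed.
Lemma n13 : f1 != f3. Proof. by move: u123; rewrite /= !inE => /and3P[/norP[]]. Qed.
Lemma n23 : f2 != f3. Proof. by move: u123; rewrite /= !inE => /and3P[_]. Qed.

Lemma hasAB f S g : data f S g L -> pr f -> hasend A g \/ hasend B g.
Proof.
move=> [_ _ _ _ _ _ [[x [s [-> l]]]|[s ->]]] /orP[]/andP[h1 h2] /=; rewrite ?l.
- by left; rewrite h1 orbT.
- by right; rewrite h1 orbT.
- by right; rewrite h2.
- by left; rewrite h2.
Qed.

Lemma mixed x s S : (forall v, v \in A -> v \in S) -> (forall v, v \in B -> v \notin S) ->
  (x \in A) || (x \in B) -> (last x s \in A) || (last x s \in B) ->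
  ends_in S (x :: s) = 1 -> hasend A (x :: s) /\ hasend B (x :: s).
Proof.
move=> HA HB; rewrite ends_cons /=.
case xA: (x \in A); case lA: (last x s \in A); case xB: (x \in B);
  case lB: (last x s \in B) => //= _ _;
  try (rewrite (HA _ xA) (HA _ lA) //);
  try (rewrite (negbTE (HB _ xB)) (negbTE (HB _ lB)) //).
Qed.

Lemma pr_AB1 z : pr z -> (z.1 \in A) || (z.1 \in B).
Proof. by case/orP => /andP[-> _]; rewrite ?orbT. Qed.
Lemma pr_AB2 z : pr z -> (z.2 \in A) || (z.2 \in B).
Proof. by case/orP => /andP[_ ->]; rewrite ?orbT. Qed.

Lemma eqcase fa fb Sa Sb g : fa \in E C -> fb \in E C -> fa != fb -> pr fa -> pr fb ->
  data fa Sa g L -> data fb Sb g L -> hasend A g /\ hasend B g.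
Proof.
move=> faE fbE nab pa pb [sa Aa Ba _ ea _ sha] [sb Ab Bb _ eb _ shb].
case: sha => ha; case: shb => hb.
- by exfalso; apply: (same_shape faE fbE nab (or_introl (conj ha hb))).
- case: ha hb ea => x [s [-> la]] [s' [ex _]] ea.
  apply: mixed Aa Ba _ _ ea; first by rewrite ex pr_AB2.
  by rewrite la pr_AB1.
- case: hb ha eb => x [s [-> lb]] [s' [ex _]] eb.
  apply: mixed Ab Bb _ _ eb; first by rewrite ex pr_AB2.
  by rewrite lb pr_AB1.
- by exfalso; exact: (same_shape faE fbE nab (or_intror (conj ha hb))).
Qed.

Lemma triple S1 S2 S3 g : data f1 S1 g L -> data f2 S2 g L -> data f3 S3 g L -> False.
Proof.
move=> [_ _ _ _ _ _ s1] [_ _ _ _ _ _ s2] [_ _ _ _ _ _ s3].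
case: s1 => h1; case: s2 => h2.
- by exact: (same_shape f1E f2E n12 (or_introl (conj h1 h2))).
- case: s3 => h3.
    by exact: (same_shape f1E f3E n13 (or_introl (conj h1 h3))).
  by exact: (same_shape f2E f3E n23 (or_intror (conj h2 h3))).
- case: s3 => h3.
    by exact: (same_shape f2E f3E n23 (or_introl (conj h2 h3))).
  by exact: (same_shape f1E f3E n13 (or_intror (conj h1 h3))).
- by exact: (same_shape f1E f2E n12 (or_intror (conj h1 h2))).
Qed.

Lemma three : connecting P (cut [:: f2; f3] C) \/ connecting P (cut [:: f1; f3] C) \/
  connecting P (cut [:: f1; f2] C).
Proof.
apply: NNPP => H.
have c1 : ~ connecting P (cut [:: f2; f3] C) by move=> c; apply: H; left.
have c2 : ~ connecting P (cut [:: f1; f3] C) by move=> c; apply: H; right; left.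
have c3 : ~ connecting P (cut [:: f1; f2] C) by move=> c; apply: H; right; right.
have u213 : uniq [:: f2; f1; f3] by rewrite /= !inE negb_or (eq_sym f2) n12 n13 n23.
have u312 : uniq [:: f3; f1; f2] by rewrite /= !inE !negb_or !(eq_sym f3) n12 n13 n23.
have [S1 [g1 d1]] := one_side f1E f2E f3E p1 p2 p3 u123 c1.
have [S2 [g2 d2]] := one_side f2E f1E f3E p2 p1 p3 u213 c2.
have [S3 [g3 d3]] := one_side f3E f1E f2E p3 p1 p2 u312 c3.
rewrite (@eq_cut _ [:: f1; f2; f3]) in d2; last by move=> z; rewrite !inE; case: (z == f1); case: (z == f2).
rewrite (@eq_cut _ [:: f1; f2; f3]) in d3; last by move=> z; rewrite !inE; case: (z == f1); case: (z == f2); case: (z == f3).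
case: (eqVneq g1 g2) => [e12|e12].
  rewrite -e12 in d2; case: (eqVneq g1 g3) => [e13|e13].
    by rewrite -e13 in d3; exact: triple d1 d2 d3.
  have [hA hB] := eqcase f1E f2E n12 p1 p2 d1 d2.
  by case: (hasAB d3 p3) => h3; apply: (pair_contra d1 d3 e13); [left|right].
case: (eqVneq g1 g3) => [e13|e13].
  rewrite -e13 in d3; have [hA hB] := eqcase f1E f3E n13 p1 p3 d1 d3.
  by case: (hasAB d2 p2) => h2; apply: (pair_contra d1 d2 e12); [left|right].
case: (eqVneq g2 g3) => [e23|e23].
  rewrite -e23 in d3; have [hA hB] := eqcase f2E f3E n23 p2 p3 d2 d3.
  by case: (hasAB d1 p1) => h1; apply: (pair_contra d2 d1 _); rewrite 1?eq_sym //; [left|right].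
case: (hasAB d1 p1) => h1; case: (hasAB d2 p2) => h2; case: (hasAB d3 p3) => h3.
- by apply: (pair_contra d1 d2 e12); left.
- by apply: (pair_contra d1 d2 e12); left.
- by apply: (pair_contra d1 d3 e13); left.
- by apply: (pair_contra d2 d3 e23); right.
- by apply: (pair_contra d2 d3 e23); left.
- by apply: (pair_contra d1 d3 e13); right.
- by apply: (pair_contra d1 d2 e12); right.
- by apply: (pair_contra d1 d2 e12); right.
Qed.

End Three.

End Main.

Section Final.
Variables (T : finType) (e : rel T) (P : {set {set T}}).
Hypothesis hP : partition P [set: T].

Lemma nedges_count (C : seq (seq T)) (A B : {set T}) : n_edges_between C A B = count (pr A B) (E C).
Proof.
rewrite /n_edges_between; elim: C => [|p C IH]; first by rewrite big_nil.
by rewrite big_cons IH E_cons count_cat.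
Qed.

Lemma size_cut_lt (C : seq (seq T)) (D : seq (T * T)) (f : T * T) : f \in E C -> f \in D -> size (E (cut D C)) < size (E C).
Proof.
move=> fE fD; rewrite E_cut size_filter.
have : has (fun z => z \in D) (E C) by apply/hasP; exists f.
rewrite has_count -(count_predC (fun z => z \in D) (E C)) => H; rewrite -[X in X < _]add0n ltn_add2r; exact: H.
Qed.

Lemma main_ind n : forall C, size (E C) < n -> path_system e C -> connecting P C ->
  exists C' : seq (seq T),
    [/\ path_system e C', connecting P C',
        (forall A, A \in P -> forall p, p \in C' ->
           all (fun xy : T * T => ~~ ((xy.1 \in A) && (xy.2 \in A))) (path_edges p)) &
        (forall A B, A \in P -> B \in P -> A != B ->
           n_edges_between C' A B <= 2)].
Proof.
elim: n => // n IH C sz ps con.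
case: (classic (forall A, A \in P -> forall p, p \in C ->
           all (fun xy : T * T => ~~ ((xy.1 \in A) && (xy.2 \in A))) (path_edges p))) => [Ha|Ha].
  case: (classic (forall A B, A \in P -> B \in P -> A != B ->
           n_edges_between C A B <= 2)) => [Hb|Hb].
    by exists C; split.
  have [A [B [AP BP AB H2]]] : exists A B, [/\ A \in P, B \in P, A != B & 2 < n_edges_between C A B].
    apply: NNPP => H'; apply: Hb => A B AP BP AB; rewrite leqNgt; apply/negP => H2.
    by apply: H'; exists A, B.
  rewrite nedges_count -size_filter in H2.
  have uf : uniq (filter (pr A B) (E C)) by rewrite filter_uniq // (uniq_E ps).
  have mf : forall z, z \in filter (pr A B) (E C) -> z \in E C /\ pr A B z.
    by move=> z; rewrite mem_filter => /andP[].
  move: H2 uf mf; case: (filter (pr A B) (E C)) => [|f1 [|f2 [|f3 r]]] // _ uf mf.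
  have [f1E p1] := mf f1 (mem_head _ _).
  have [f2E p2] : f2 \in E C /\ pr A B f2 by apply: mf; rewrite !inE eqxx !orbT.
  have [f3E p3] : f3 \in E C /\ pr A B f3 by apply: mf; rewrite !inE eqxx !orbT.
  have u3 : uniq [:: f1; f2; f3].
    by move: uf; rewrite -[f1 :: _]/([:: f1; f2; f3] ++ r) cat_uniq => /andP[].
  have := three hP AP BP ps con f1E f2E f3E p1 p2 p3 u3.
  case => [c|[c|c]]; apply: (IH _ _ (ps_cut _ ps) c).
  - by apply: leq_trans (size_cut_lt f2E _) sz; rewrite !inE eqxx.
  - by apply: leq_trans (size_cut_lt f1E _) sz; rewrite !inE eqxx.
  - by apply: leq_trans (size_cut_lt f1E _) sz; rewrite !inE eqxx.
have [A [AP [p [pC nall]]]] : exists A, A \in P /\ exists p, p \in C /\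
    ~~ all (fun xy : T * T => ~~ ((xy.1 \in A) && (xy.2 \in A))) (path_edges p).
  apply: NNPP => H'; apply: Ha => A AP p pC; apply: contraT => nall.
  by exfalso; apply: H'; exists A; split => //; exists p.
case/allPn: nall => z zp /negPn /andP[z1 z2].
have zE : z \in E C by apply/flattenP; exists (path_edges p) => //; apply: map_f.
apply: (IH (cut [:: z] C)); last first.
- split.
  + apply: (cross_conn hP) => S sS [u uS] [v vS]; apply: cross_cut.
      by move=> w; rewrite inE => /eqP ->; apply: sS AP _ _ z1 z2.
    exact: (conn_cross hP con.1 sS uS vS).
  + move=> Z ZP; have := par_cut [:: z] C Z; rewrite /degS => ->.
    rewrite (negbTE (con.2 Z ZP)) /= sum_mem ?(uniq_E ps) //; last by move=> w; rewrite inE => /eqP ->.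
    rewrite big_cons big_nil addn0 (block_sat hP ZP AP z1 z2).
    by rewrite addnn odd_double.
- exact: ps_cut.
- by apply: leq_trans (size_cut_lt zE _) sz; rewrite inE.
Qed.

End Final.

Unset Implicit Arguments.

Theorem mainTheorem13 (T : finType) (e : rel T)
  (e_sym : symmetric e) (e_irr : irreflexive e)
  (P : {set {set T}}) (hP : partition P [set: T])
  (C : seq (seq T)) (hC : path_system e C) (hCc : connecting P C) :
  exists C' : seq (seq T),
    [/\ path_system e C', connecting P C',
        (forall A, A \in P -> forall p, p \in C' ->
           all (fun xy : T * T => ~~ ((xy.1 \in A) && (xy.2 \in A))) (path_edges p)) &
        (forall A B, A \in P -> B \in P -> A != B ->
           n_edges_between C' A B <= 2)].
Proof. exact: (main_ind hP (ltnSn (size (E C))) hC hCc). Qed.
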